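(* The image of $\phi\colon M\to\mathbb R^n\times\mathbb C^n$ is the set $K=\{(a,b)\in\mathbb R^n\times\mathbb C^n: a_k\geqslant|b_k|\ \text{for } k=1,\dots,d\}$. Moreover $\phi$ induces a finite-to-one surjection $\tilde\phi\colon M/\mathbb T^n\to K$, and the fibre of $\tilde\phi$ over $(a,b)\in K$ consists of exactly $2^m$ points, where $m$ is the number of indices $k$ with $a_k>|b_k|$.
   Context: Let $\mathbb C^{d,d}=\mathbb C^d\times\mathbb C^d$ with coordinates $(z,w)$, metric $g=\mathrm{Re}\sum_k(dz_k\,d\bar z_k-dw_k\,d\bar w_k)$, $I(z,w)=(iz,-iw)$, $S(z,w)=(w,z)$, $T=IS$, and forms $\omega_A(Y,Z)=g(Y,AZ)$. The torus $\mathbb T^d$ acts by $(z_k,w_k)\mapsto(e^{i\theta_k}z_k,e^{i\theta_k}w_k)$. Fix $u_1,\dots,u_d\in\mathbb Z^n$ spanning $\mathbb R^n$; let $\beta\colon\mathbb R^d\to\mathbb R^n$, $e_k\mapsto u_k$, $\mathfrak n=\ker\beta$ with inclusion $\iota$, and $N\subset\mathbb T^d$ the kernel of the induced homomorphism $\mathbb T^d\to\mathbb T^n$. Identify $\mathbb R^d$ with its dual by the standard inner product. Fix real constants $\lambda^{(j)}_k$ ($j=1,2,3$, $k=1,\dots,d$), put $\lambda^{(c)}_k=\lambda^{(2)}_k+i\lambda^{(3)}_k$, and let $\mu=(\mu_I,\mu_S,\mu_T)$ with $\mu_I(z,w)=\sum_k(\tfrac12(|z_k|^2+|w_k|^2)+\lambda^{(1)}_k)\iota^*e_k$,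 $(\mu_S+i\mu_T)(z,w)=\sum_k(iz_k\bar w_k+\lambda^{(c)}_k)\iota^*e_k$. Let $M=\mu^{-1}(0)/N$, with the residual action of $\mathbb T^n=\mathbb T^d/N$. For $(z,w)\in\mu^{-1}(0)$ there are unique $a\in\mathbb R^n$, $b\in\mathbb C^n$ with $\langle a,u_k\rangle=\tfrac12(|z_k|^2+|w_k|^2)+\lambda^{(1)}_k$ and $\langle b,u_k\rangle=iz_k\bar w_k+\lambda^{(c)}_k$ for all $k$ ($\langle\cdot,\cdot\rangle$ the standard inner product, extended complex-bilinearly); set $\phi([z,w])=(a,b)$. For $(a,b)\in\mathbb R^n\times\mathbb C^n$ write $a_k=\langle a,u_k\rangle-\lambda^{(1)}_k$, $b_k=\langle b,u_k\rangle-\lambda^{(c)}_k$. *)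

(* Defs.v *)
From mathcomp Require Import all_boot all_order all_algebra.
From mathcomp Require Import reals.
From mathcomp Require Export complex.
Set Implicit Arguments. Unset Strict Implicit. Unset Printing Implicit Defensive.
Import Order.TTheory GRing.Theory Num.Theory.
Local Open Scope ring_scope.

Section SplitHypertoric.
Variables (R : realType) (d n : nat).
(* the integer vectors u_1..u_d in Z^n are the rows of U *)
Variable U : 'M[int]_(d, n).
Variables (lam1 lam2 lam3 : 'I_d -> R).

Definition point := (('I_d -> R[i]) * ('I_d -> R[i]))%type.

(* U as a real matrix; the u_k span R^n iff this matrix is row-full *)
Definition Ureal : 'M[R]_(d, n) := map_mx (fun x : int => x%:~R) U.

Definition lamc (k : 'I_d) : R[i] := (lam2 k +i* lam3 k)%C.

(* x in n = ker beta, beta(e_k) = u_k *)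
Definition in_ker_beta (x : 'I_d -> R) : Prop :=
  forall i : 'I_n, \sum_(k < d) x k * (U k i)%:~R = 0.

(* coefficients of iota^* e_k in mu_I and mu_S + i mu_T *)
Definition muI_coef (p : point) (k : 'I_d) : R :=
  2^-1 * (Normc.normc (p.1 k) ^+ 2 + Normc.normc (p.2 k) ^+ 2) + lam1 k.
Definition muC_coef (p : point) (k : 'I_d) : R[i] :=
  'i%C * p.1 k * (p.2 k)^*%C + lamc k.

(* mu(p) = 0 in n^* (x) R^3: the functionals sum_k c_k iota^* e_k vanish on n *)
Definition mu_zero (p : point) : Prop :=
  forall x : 'I_d -> R, in_ker_beta x ->
    \sum_(k < d) x k * muI_coef p k = 0 /\
    \sum_(k < d) (x k)%:C%C * muC_coef p k = 0.

Definition pairR (a : 'I_n -> R) (k : 'I_d) : R :=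
  \sum_(i < n) a i * (U k i)%:~R.
Definition pairC (b : 'I_n -> R[i]) (k : 'I_d) : R[i] :=
  \sum_(i < n) b i * (U k i)%:~R.

Definition phi_rel (p : point) (a : 'I_n -> R) (b : 'I_n -> R[i]) : Prop :=
  forall k : 'I_d, pairR a k = muI_coef p k /\ pairC b k = muC_coef p k.

Definition a_k (a : 'I_n -> R) (k : 'I_d) : R := pairR a k - lam1 k.
Definition b_k (b : 'I_n -> R[i]) (k : 'I_d) : R[i] := pairC b k - lamc k.

Definition inK (a : 'I_n -> R) (b : 'I_n -> R[i]) : Prop :=
  forall k : 'I_d, Normc.normc (b_k b k) <= a_k a k.

Definition mcount (a : 'I_n -> R) (b : 'I_n -> R[i]) : nat :=
  #|[set k : 'I_d | Normc.normc (b_k b k) < a_k a k]|.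

End SplitHypertoric.

Definition torus_equiv (R : realType) (d : nat) (p q : point R d) : Prop :=
  exists t : 'I_d -> R[i],
    (forall k, Normc.normc (t k) = 1) /\
    (forall k, q.1 k = t k * p.1 k /\ q.2 k = t k * p.2 k).

(* Main.v *)
Require Import Defs.
From mathcomp Require Import all_boot all_order all_algebra.
From mathcomp Require Import reals.
From mathcomp Require Import complex.
From mathcomp Require Import ring lra.
Import Order.TTheory GRing.Theory Num.Theory.
Local Open Scope ring_scope.

Set Implicit Arguments.
Unset Strict Implicit.
Section Aux.
Variable R : rcfType.
Local Notation N := (@Normc.normc R).
Implicit Types z w : R[i].

Lemma N_ge0 z : 0 <= N z.
Proof. by case: z => a b; rewrite /= sqrtr_ge0. Qed.

Lemma N_sq z : N z ^+ 2 = complex.Re z ^+ 2 + complex.Im z ^+ 2.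
Proof. by case: z => a b /=; rewrite sqr_sqrtr // addr_ge0 ?sqr_ge0. Qed.

Lemma NJ z : N (z^*)%C = N z.
Proof. by case: z => a b /=; rewrite sqrrN. Qed.

Lemma Ni : N 'i%C = 1.
Proof. by rewrite /= expr0n expr1n add0r sqrtr1. Qed.

Lemma NR r : 0 <= r -> N r%:C%C = r.
Proof. by move=> r0 /=; rewrite expr0n addr0 sqrtr_sqr ger0_norm. Qed.

Lemma mulJ z : z * (z^*)%C = (N z ^+ 2)%:C%C.
Proof.
rewrite N_sq; case: z => a b /=; apply/eqP; rewrite eq_complex /=; apply/andP; split; apply/eqP; ring.
Qed.

Lemma N_eq0 z : (N z == 0) = (z == 0).
Proof.
apply/eqP/eqP; first exact: Normc.eq0_normc.
by move=> ->; rewrite Normc.normc0.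
Qed.

Lemma iJ : ('i%C)^*%C = - 'i%C :> R[i].
Proof. by apply/eqP; rewrite eq_complex /= oppr0 !eqxx. Qed.

Lemma ii : 'i%C * 'i%C = -1 :> R[i].
Proof. by rewrite -expr2 sqr_i. Qed.

Lemma conjM z w : ((z * w)^*)%C = (z^*)%C * (w^*)%C.
Proof. case: z => a b; case: w => c e; apply/eqP; rewrite eq_complex /=; apply/andP; split; apply/eqP; ring. Qed.

Lemma N_neq0 z : z != 0 -> N z != 0.
Proof. by rewrite N_eq0. Qed.

Lemma orbit z w z' w' : N z = N z' -> N w = N w' -> z * (w^*)%C = z' * (w'^*)%C ->
  exists t, N t = 1 /\ z' = t * z /\ w' = t * w.
Proof.
move=> Hz Hw H.
have [z0|z0] := eqVneq z 0.
  have z'0 : z' = 0 by apply/eqP; rewrite -N_eq0 -Hz z0 Normc.normc0.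
  have [w0|w0] := eqVneq w 0.
    have w'0 : w' = 0 by apply/eqP; rewrite -N_eq0 -Hw w0 Normc.normc0.
    by exists 1; rewrite Normc.normc1 z0 z'0 w0 w'0 !mulr0.
  exists (w' / w); split.
    by rewrite Normc.normcM Normc.normcV -Hw divff // N_neq0.
  by rewrite z0 z'0 mulr0 divfK.
have z'0 : z' != 0 by rewrite -N_eq0 -Hz N_neq0.
exists (z' / z); split.
  by rewrite Normc.normcM Normc.normcV Hz divff // N_neq0.
split; first by rewrite divfK.
have HJ : (z^*)%C * w = (z'^*)%C * w'.
  by move: (congr1 (@conjc R) H); rewrite !rmorphM /= !conjcK.
have E : z' * (z'^*)%C = z * (z^*)%C by rewrite !mulJ Hz.
have z'J : (z'^*)%C != 0 by rewrite conjc_eq0.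
apply: (mulfI z'J); rewrite -HJ.
transitivity ((z * (z^*)%C) * w / z); first by field.
by rewrite -E; field.
Qed.

Lemma sq_inj (a b : R) : 0 <= a -> 0 <= b -> a ^+ 2 = b ^+ 2 -> a = b.
Proof. move=> a0 b0 /eqP; rewrite eqrXn2 // => /eqP //. Qed.

Lemma real_step (x y x' y' : R) : 0<=x -> 0<=y -> 0<=x' -> 0<=y' ->
  x^+2+y^+2 = x'^+2+y'^+2 -> x*y = x'*y' -> (y<x) = (y'<x') -> x = x' /\ y = y'.
Proof.
move=> x0 y0 x'0 y'0 e1 e2 e3.
have s : x + y = x' + y'.
  by apply: sq_inj; [lra|lra|lra].
have [h|h] := ltP y x.
  have h' : y' < x' by rewrite -e3.
  have : x - y = x' - y' by apply: sq_inj; [lra|lra|lra].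
  move=> d; split; lra.
have h' : x' <= y' by rewrite leNgt -e3 -leNgt.
have : y - x = y' - x' by apply: sq_inj; [lra|lra|lra].
move=> d; split; lra.
Qed.

Definition inv z w (al : R) (be : R[i]) :=
  2^-1 * (N z ^+ 2 + N w ^+ 2) = al /\ 'i%C * z * (w^*)%C = be.

Lemma NB z w : N ('i%C * z * (w^*)%C) = N z * N w.
Proof. by rewrite !Normc.normcM Ni NJ mul1r. Qed.

Lemma inv_le z w al be : inv z w al be -> N be <= al.
Proof.
move=> [<- <-]; rewrite NB.
have := sqr_ge0 (N z - N w); lra.
Qed.

Lemma inv_eq z w z' w' al be : inv z w al be -> inv z' w' al be ->
  (N w < N z) = (N w' < N z') ->
  exists t, N t = 1 /\ z' = t * z /\ w' = t * w.
Proof.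
move=> [H1 H2] [H1' H2'] Hc.
have e2 : N z * N w = N z' * N w' by rewrite -!NB H2 H2'.
have e1 : N z ^+ 2 + N w ^+ 2 = N z' ^+ 2 + N w' ^+ 2 by lra.
have [Ez Ew] := real_step (N_ge0 _) (N_ge0 _) (N_ge0 _) (N_ge0 _) e1 e2 Hc.
apply: orbit => //.
have i0 : 'i%C != 0 :> R[i] by apply/eqP => /(congr1 (@complex.Im R)) /= /eqP; rewrite oner_eq0.
apply: (mulfI i0); rewrite !mulrA H2 H2' //.
Qed.

Lemma inv_tie z w al be : inv z w al be -> ~ (N be < al) -> (N w < N z) = false.
Proof.
move=> [H1 H2] Hn.
have le := @inv_le z w al be (conj H1 H2).
have E : N be = al by apply/eqP; rewrite eq_le le /=; rewrite leNgt; apply/negP.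
move: E; rewrite -H2 NB => E.
have : (N z - N w) ^+ 2 = 0 by lra.
move/eqP; rewrite sqrf_eq0 subr_eq0 => /eqP ->; exact: ltxx.
Qed.

Definition pt (be : R[i]) (rz rw : R) : R[i] * R[i] :=
  if rz == 0 then (0, rw%:C%C) else (rz%:C%C, 'i%C * (be^*)%C / rz%:C%C).

Lemma pt_ok al be rz rw : 0 <= rz -> 0 <= rw -> rz ^+ 2 + rw ^+ 2 = 2 * al ->
  rz * rw = N be ->
  [/\ N (pt be rz rw).1 = rz, N (pt be rz rw).2 = rw & inv (pt be rz rw).1 (pt be rz rw).2 al be].
Proof.
move=> z0 w0 e1 e2; rewrite /pt.
have [rzE|rz0] := eqVneq rz 0.
  subst rz.
  have b0 : be = 0 by apply/eqP; rewrite -N_eq0 -e2 mul0r.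
  have N0 : N 0 = 0 by apply/eqP; rewrite N_eq0.
  have I : inv 0 rw%:C%C al be.
    rewrite /inv N0 (NR w0); split; first lra.
    by rewrite b0 mulr0 mul0r.
  split; [exact: N0 | exact: NR | exact: I].
have rzC : rz%:C%C != 0 :> R[i].
  by apply/eqP => /(congr1 (@complex.Re R)) /= /eqP; rewrite (negPf rz0).
have Nw : N ('i%C * (be^*)%C / rz%:C%C) = rw.
  by rewrite !Normc.normcM Normc.normcV Ni NJ NR // mul1r -e2; field.
have Nz : N rz%:C%C = rz := NR z0.
split; [exact: Nz | exact: Nw | ].
change (inv rz%:C%C ('i%C * (be^*)%C / rz%:C%C) al be).
rewrite /inv Nz Nw; split.
  by rewrite e1; field.
rewrite !conjM conjcK conjc_inv conjc_real iJ.
transitivity (- ('i%C * 'i%C) * be * (rz%:C%C / rz%:C%C)); first by field.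
by rewrite ii opprK mul1r divff // mulr1.
Qed.

Definition rep (al : R) (be : R[i]) (c : bool) : R[i] * R[i] :=
  let s := Num.sqrt (al ^+ 2 - N be ^+ 2) in
  let r1 := Num.sqrt (al + s) in
  let r2 := Num.sqrt (al - s) in
  if c then pt be r1 r2 else pt be r2 r1.

Lemma rep_ok al be c : N be <= al ->
  inv (rep al be c).1 (rep al be c).2 al be /\
  (N (rep al be c).2 < N (rep al be c).1) = c && (N be < al).
Proof.
move=> le; rewrite /rep /=.
set s := Num.sqrt (al ^+ 2 - N be ^+ 2).
have b0 := N_ge0 be.
have d0 : 0 <= al ^+ 2 - N be ^+ 2 by nra.
have s0 : 0 <= s by rewrite sqrtr_ge0.
have ss : s ^+ 2 = al ^+ 2 - N be ^+ 2 by rewrite /s sqr_sqrtr.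
have a0 : 0 <= al by exact: le_trans b0 le.
have sa : s <= al by nra.
have p1 : 0 <= al + s by lra.
have p2 : 0 <= al - s by lra.
set r1 := Num.sqrt (al + s); set r2 := Num.sqrt (al - s).
have r10 : 0 <= r1 by rewrite sqrtr_ge0.
have r20 : 0 <= r2 by rewrite sqrtr_ge0.
have r1s : r1 ^+ 2 = al + s by rewrite /r1 sqr_sqrtr.
have r2s : r2 ^+ 2 = al - s by rewrite /r2 sqr_sqrtr.
have e1 : r1 ^+ 2 + r2 ^+ 2 = 2 * al by lra.
have e2 : r1 * r2 = N be.
  apply: sq_inj; [nra|done|]. by rewrite exprMn r1s r2s; lra.
case: c => /=.
  have [A B C] := @pt_ok al be r1 r2 r10 r20 e1 e2.
  split => //; rewrite A B.
  apply/idP/idP => h.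
    have : 0 < s by nra.
    by move=> sp; rewrite lt_neqAle le andbT; apply/eqP => E; move: ss; rewrite E; nra.
  suff : 0 < s by nra.
  rewrite lt_neqAle s0 andbT; apply/eqP => E; move: ss; rewrite -E expr0n /=; nra.
have e1' : r2 ^+ 2 + r1 ^+ 2 = 2 * al by lra.
have e2' : r2 * r1 = N be by rewrite mulrC.
have [A B C] := @pt_ok al be r2 r1 r20 r10 e1' e2'.
split => //; rewrite A B; apply/negP => h; nra.
Qed.
End Aux.

Section Main.
Variables (R : realType) (d n : nat) (U : 'M[int]_(d, n)) (lam1 lam2 lam3 : 'I_d -> R).
Local Notation N := (@Normc.normc R).

Lemma phi_inv (p : point R d) a b : phi_rel U lam1 lam2 lam3 p a b ->
  forall k, inv (p.1 k) (p.2 k) (a_k U lam1 a k) (b_k U lam2 lam3 b k).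
Proof.
move=> H k; rewrite /a_k /b_k; case: (H k) => -> ->.
by rewrite /muI_coef /muC_coef !addrK.
Qed.

Lemma inv_phi (p : point R d) a b :
  (forall k, inv (p.1 k) (p.2 k) (a_k U lam1 a k) (b_k U lam2 lam3 b k)) ->
  phi_rel U lam1 lam2 lam3 p a b.
Proof.
move=> H k; case: (H k); rewrite /a_k /b_k /muI_coef /muC_coef => e1 e2.
by rewrite e1 e2 !subrK.
Qed.

Lemma phi_mu (p : point R d) a b : phi_rel U lam1 lam2 lam3 p a b ->
  mu_zero U lam1 lam2 lam3 p.
Proof.
move=> H x Hx; split.
  transitivity (\sum_(k < d) x k * pairR U a k).
    by apply: eq_bigr => k _; rewrite (H k).1.
  rewrite /pairR.
  under eq_bigr do rewrite mulr_sumr.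
  rewrite exchange_big /=.
  apply: big1 => i _.
  transitivity (a i * \sum_(k < d) x k * (U k i)%:~R).
    by rewrite mulr_sumr; apply: eq_bigr => k _; ring.
  by rewrite Hx mulr0.
transitivity (\sum_(k < d) (x k)%:C%C * pairC U b k).
  by apply: eq_bigr => k _; rewrite (H k).2.
rewrite /pairC.
under eq_bigr do rewrite mulr_sumr.
rewrite exchange_big /=.
apply: big1 => i _.
transitivity (b i * (\sum_(k < d) x k * (U k i)%:~R)%:C%C).
  rewrite rmorph_sum mulr_sumr; apply: eq_bigr => k _.
  rewrite rmorphM /= -(rmorph_int (real_complex R)); ring.
by rewrite Hx mulr0.
Qed.

Lemma torus_phi (p q : point R d) a b : torus_equiv p q ->
  phi_rel U lam1 lam2 lam3 p a b -> phi_rel U lam1 lam2 lam3 q a b.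
Proof.
move=> [t [Ht Hq]] H; apply: inv_phi => k.
have [I1 I2] := phi_inv H k.
case: (Hq k) => -> ->; rewrite /inv !Normc.normcM Ht !mul1r conjM; split => //.
rewrite -I2.
have tt : t k * (t k)^*%C = 1 by rewrite mulJ Ht expr1n.
transitivity ('i%C * p.1 k * (p.2 k)^*%C * (t k * (t k)^*%C)); first by ring.
by rewrite tt mulr1.
Qed.
End Main.
Unset Implicit Arguments.

Theorem proposition5p1 (R : realType) (d n : nat) (U : 'M[int]_(d, n))
    (lam1 lam2 lam3 : 'I_d -> R) :
  row_full (Ureal R U) ->
  (* image of phi is K *)
  (forall (a : 'I_n -> R) (b : 'I_n -> R[i]),
      (exists p : point R d, mu_zero U lam1 lam2 lam3 p /\
                             phi_rel U lam1 lam2 lam3 p a b)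
      <-> inK U lam1 lam2 lam3 a b) /\
  (* phi is T^d-invariant, hence descends to M / T^n = mu^{-1}(0) / T^d *)
  (forall (p q : point R d) a b,
      mu_zero U lam1 lam2 lam3 p -> torus_equiv p q ->
      phi_rel U lam1 lam2 lam3 p a b -> phi_rel U lam1 lam2 lam3 q a b) /\
  (* the fibre of the induced map over (a,b) in K has exactly 2^m points *)
  (forall a b, inK U lam1 lam2 lam3 a b ->
     exists reps : 'I_(2 ^ mcount U lam1 lam2 lam3 a b) -> point R d,
       (forall j, mu_zero U lam1 lam2 lam3 (reps j) /\
                  phi_rel U lam1 lam2 lam3 (reps j) a b) /\
       (forall j j', torus_equiv (reps j) (reps j') -> j = j') /\
       (forall p, mu_zero U lam1 lam2 lam3 p -> phi_rel U lam1 lam2 lam3 p a b ->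
                  exists j, torus_equiv (reps j) p)).
Proof.
move=> _; split.
  move=> a b; split.
    case=> p [_ H] k; have := phi_inv H k; move/inv_le. done.
  move=> HK.
  pose p : point R d :=
    (fun k => (rep (a_k U lam1 a k) (b_k U lam2 lam3 b k) true).1,
     fun k => (rep (a_k U lam1 a k) (b_k U lam2 lam3 b k) true).2).
  have Hp : phi_rel U lam1 lam2 lam3 p a b.
    by apply: inv_phi => k; exact: (rep_ok true (HK k)).1.
  by exists p; split => //; exact: phi_mu Hp.
split.
  move=> p q a b _; exact: torus_phi.
move=> a b HK.
set S := [set k : 'I_d | Normc.normc (b_k U lam2 lam3 b k) < a_k U lam1 a k].
have Hcard : #|powerset S| = (2 ^ mcount U lam1 lam2 lam3 a b)%N := card_powerset S.
pose Cof (j : 'I_(2 ^ mcount U lam1 lam2 lam3 a b)) := enum_val (cast_ord (esym Hcard) j).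
pose reps j : point R d :=
    (fun k => (rep (a_k U lam1 a k) (b_k U lam2 lam3 b k) (k \in Cof j)).1,
     fun k => (rep (a_k U lam1 a k) (b_k U lam2 lam3 b k) (k \in Cof j)).2).
have HCS j : Cof j \subset S by rewrite -powersetE; exact: enum_valP.
have Hinv j k : inv ((reps j).1 k) ((reps j).2 k) (a_k U lam1 a k) (b_k U lam2 lam3 b k).
  exact: (rep_ok _ (HK k)).1.
have Hcmp j k : (Normc.normc ((reps j).2 k) < Normc.normc ((reps j).1 k)) = (k \in Cof j) && (k \in S).
  by rewrite (rep_ok _ (HK k)).2 inE.
exists reps; split; [|split].
- move=> j.
  have Hp : phi_rel U lam1 lam2 lam3 (reps j) a b by apply: inv_phi => k; exact: Hinv.
  by split => //; exact: phi_mu Hp.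
- move=> j j' [t [Ht Hq]].
  have EC : Cof j = Cof j'.
    apply/setP => k.
    have := Hcmp j k; have := Hcmp j' k.
    case: (Hq k) => -> ->; rewrite !Normc.normcM Ht !mul1r => E' E.
    have {E'}E := etrans (esym E) E'.
    case kS : (k \in S); first by move: E; rewrite kS !andbT.
    have nj : k \notin Cof j by apply: contraFN kS; apply: (subsetP (HCS j)).
    have nj' : k \notin Cof j' by apply: contraFN kS; apply: (subsetP (HCS j')).
    by rewrite (negPf nj) (negPf nj').
  by move: EC; rewrite /Cof => /enum_val_inj /cast_ord_inj.
- move=> p _ Hp.
  set C := [set k in S | Normc.normc (p.2 k) < Normc.normc (p.1 k)].
  have HC : C \in powerset S.
    by rewrite powersetE; apply/subsetP => k; rewrite inE => /andP[].
  exists (cast_ord Hcard (enum_rank_in HC C)).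
  have ECj : Cof (cast_ord Hcard (enum_rank_in HC C)) = C.
    by rewrite /Cof cast_ordK enum_rankK_in.
  have : forall k, exists t, Normc.normc t = 1 /\
      p.1 k = t * (reps (cast_ord Hcard (enum_rank_in HC C))).1 k /\
      p.2 k = t * (reps (cast_ord Hcard (enum_rank_in HC C))).2 k.
    move=> k; apply: inv_eq (Hinv _ k) (phi_inv Hp k) _.
    rewrite Hcmp ECj inE.
    case kS : (k \in S); first by rewrite /= andbT.
    symmetry; apply: inv_tie (phi_inv Hp k) _.
    by move: kS; rewrite inE => /negbT/negP.
  case/fin_all_exists => t Ht; exists t; split => k; [exact: (Ht k).1 | exact: (Ht k).2].
Qed.
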